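(* Let $X$ be a Banach space as described in the context and let $f\in X$ be a function that is not a polynomial. If there exists a sequence $p_n\in\mathcal{P}_n[\mathbb{Z}]$ with $\lim_{n\to\infty}\|f-p_n\|=0$, then $\liminf_{n\to\infty}\|z^n\|=0$.
   Context: $\mathbb{D}=\{z\in\mathbb{C}:|z|<1\}$. $X$ is a complex Banach space of functions analytic in $\mathbb{D}$ whose norm $\|\cdot\|$ satisfies: (i) $\|f(\cdot\, e^{it})\|=\|f(\cdot)\|$ for all $t\in\mathbb{R}$ and $f\in X$; (ii) $\|f\|<\infty$ for every entire function $f$; (iii) for all $f\in X$ and $g\in L[0,2\pi]$, $\big\|\frac{1}{2\pi}\int_0^{2\pi} f(ze^{it})g(t)\,dt\big\|\le \frac{1}{2\pi}\int_0^{2\pi}|g(t)|\,dt\cdot\|f\|$. $\|z^n\|$ is the norm in $X$ of $z\mapsto z^n$. A complex number is called an integer if its real and imaginary parts are integers; $\mathcal{P}_n[\mathbb{Z}]$ is the set of complex polynomials of degree at most $n-1$ with integer coefficients in this sense. *)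

(* Defs.v *)
From mathcomp Require Import all_boot all_order all_algebra.
From mathcomp Require Import all_classical all_reals all_analysis.
From mathcomp Require Import complex.
Import Order.TTheory GRing.Theory Num.Theory.
Import numFieldNormedType.Exports.
Local Open Scope classical_set_scope.
Local Open Scope ring_scope.
Local Open Scope complex_scope.

Set Implicit Arguments.
Unset Strict Implicit.
Unset Printing Implicit Defensive.

Definition analytic_in_D (R : realType) (f : R[i] -> R[i]) : Prop :=
  forall z : R[i], `|z| < 1 -> derivable (f : R[i]^o -> R[i]^o) z 1.

Definition entire (R : realType) (f : R[i] -> R[i]) : Prop :=
  forall z : R[i], derivable (f : R[i]^o -> R[i]^o) z 1.

Definition expi (R : realType) (t : R) : R[i] := cos t +i* sin t.

Definition cabs (R : realType) (c : R[i]) : R := complex.Re `|c|.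

Definition cintegral (R : realType) (F : R -> R[i]) (a b : R) : R[i] :=
  Rintegral (@lebesgue_measure R) `[a, b] (fun t => complex.Re (F t)) +i*
  Rintegral (@lebesgue_measure R) `[a, b] (fun t => complex.Im (F t)).

Definition L1_02pi (R : realType) (g : R -> R[i]) : Prop :=
  (@lebesgue_measure R).-integrable `[0, 2 * pi] (EFin \o (fun t => complex.Re (g t))) /\
  (@lebesgue_measure R).-integrable `[0, 2 * pi] (EFin \o (fun t => complex.Im (g t))).

(* The space X is given by its norm N, defined on functions C -> C with values in
   [0, +oo]; X = analytic functions in D with finite norm. *)
Definition inX (R : realType) (N : (R[i] -> R[i]) -> \bar R) (f : R[i] -> R[i]) : Prop :=
  analytic_in_D f /\ (N f < +oo)%E.

Definition banach_of_analytic (R : realType) (N : (R[i] -> R[i]) -> \bar R) : Prop :=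
  (forall f g : R[i] -> R[i], (forall z, `|z| < 1 -> f z = g z) -> N f = N g) /\
  [/\ (forall f, inX N f -> (0 <= N f)%E),
      (forall f, inX N f -> N f = 0%E -> forall z, `|z| < 1 -> f z = 0),
      (forall f (c : R[i]), inX N f -> N (fun z => c * f z) = ((cabs c)%:E * N f)%E),
      (forall f g, inX N f -> inX N g -> (N (fun z => (f z + g z)%R) <= N f + N g)%E) &
      (forall u : nat -> R[i] -> R[i], (forall n, inX N (u n)) ->
         (forall e : R, 0 < e -> exists M : nat, forall m n, (M <= m)%N -> (M <= n)%N ->
            (N (fun z => (u m z - u n z)%R) < e%:E)%E) ->
         exists f, inX N f /\ (fun n => N (fun z => (u n z - f z)%R)) @ \oo --> 0%E)].

Definition X_axioms (R : realType) (N : (R[i] -> R[i]) -> \bar R) : Prop :=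
  [/\ banach_of_analytic N,
      (* (i) rotation invariance *)
      (forall f (t : R), inX N f -> N (fun z => f (z * expi t)) = N f),
      (* (ii) entire functions have finite norm *)
      (forall f, entire f -> (N f < +oo)%E) &
      (* (iii) convolution inequality *)
      (forall f (g : R -> R[i]), inX N f -> L1_02pi g ->
         let h := fun z => (2 * pi)^-1%:C * cintegral (fun t => f (z * expi t) * g t) 0 (2 * pi) in
         inX N h /\
         (N h <= ((2 * pi)^-1 * Rintegral (@lebesgue_measure R) `[0, 2 * pi] (fun t => cabs (g t)))%:E
                 * N f)%E)].

Definition is_polynomial_on_D (R : realType) (f : R[i] -> R[i]) : Prop :=
  exists q : {poly R[i]}, forall z, `|z| < 1 -> f z = q.[z].

Definition gauss_int (R : realType) (c : R[i]) : bool :=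
  (complex.Re c \is a Num.int) && (complex.Im c \is a Num.int).

(* P_n[Z]: polynomials of degree at most n-1 with Gaussian-integer coefficients *)
Definition PnZ (R : realType) (n : nat) (p : {poly R[i]}) : Prop :=
  (size p <= n)%N /\ forall k : nat, gauss_int p`_k.

(* Main.v *)
Require Import Defs.
From mathcomp Require Import all_boot all_order all_algebra.
From mathcomp Require Import all_classical all_reals all_analysis.
From mathcomp Require Import complex.
Import Order.TTheory GRing.Theory Num.Theory.
Import numFieldNormedType.Exports.
Local Open Scope classical_set_scope.
Local Open Scope ring_scope.
Local Open Scope complex_scope.
Set Implicit Arguments. Unset Strict Implicit. Unset Printing Implicit Defensive.
From mathcomp Require Import ring lra zify.
Section S.
Variable R : realType.

Lemma derivable_hornerC (p : {poly R[i]}) (x : R[i]) :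
  derivable ((fun z => p.[z]) : R[i]^o -> R[i]^o) x 1.
Proof.
elim/poly_ind: p => [|p r ih].
  have -> : (fun z : R[i]^o => (0 : {poly R[i]}).[z]) = cst 0.
    by apply/funext => y; rewrite horner0.
  exact: derivable_cst.
have -> : (fun z : R[i]^o => (p * 'X + r%:P).[z]) =
   ((fun z : R[i]^o => p.[z]) * (@id R[i]^o)) + cst r.
  by apply/funext => y; rewrite !hornerE.
apply: derivableD; last exact: derivable_cst.
have H := @derivableM R[i] R[i]^o (fun z => p.[z]) id (x : R[i]^o) 1 ih (@derivable_id _ _ _ _).
exact: H.
Qed.
End S.
Section T.
Variable R : realType.
Variable N : (R[i] -> R[i]) -> \bar R.
Hypothesis ax : X_axioms N.

Lemma inX_poly (q : {poly R[i]}) : inX N (fun z => q.[z]).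
Proof.
case: ax => _ _ Hent _; split; first by move=> z _; exact: derivable_hornerC.
by apply: Hent => z; exact: derivable_hornerC.
Qed.

Lemma inX_ge0 f : inX N f -> (0 <= N f)%E.
Proof. by case: ax => -[_ [H _ _ _ _]] _ _ _; exact: H. Qed.

Lemma inX_fin f : inX N f -> N f = (fine (N f))%:E.
Proof.
move=> hf; rewrite fineK //; rewrite ge0_fin_numE; [exact: hf.2|exact: inX_ge0].
Qed.

Definition np (q : {poly R[i]}) := fine (N (fun z => q.[z])).

Lemma npE q : N (fun z => q.[z]) = (np q)%:E.
Proof. exact/inX_fin/inX_poly. Qed.

Lemma np_ge0 q : 0 <= np q.
Proof. by rewrite -lee_fin -npE; apply/inX_ge0/inX_poly. Qed.

Lemma np_ext p q : (forall z, p.[z] = q.[z]) -> np p = np q.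
Proof. by move=> h; rewrite /np; congr (fine (N _)); apply/funext => z. Qed.

Lemma npD p q : np (p + q) <= np p + np q.
Proof.
case: ax => -[_ [_ _ _ Htri _]] _ _ _.
rewrite -lee_fin -npE EFinD -!npE.
have -> : (fun z => (p + q).[z]) = (fun z => p.[z] + q.[z]).
  by apply/funext => z; rewrite hornerD.
by apply: Htri; exact: inX_poly.
Qed.

Lemma npZ c q : np (c *: q) = cabs c * np q.
Proof.
case: ax => -[_ [_ _ Hsc _ _]] _ _ _.
apply: EFin_inj; rewrite -npE EFinM -npE.
have -> : (fun z => (c *: q).[z]) = (fun z => c * q.[z]).
  by apply/funext => z; rewrite hornerZ.
by apply/Hsc; exact: inX_poly.
Qed.
Lemma expiD (a b : R) : expi a * expi b = expi (a + b).
Proof. by rewrite /expi cosD sinD; simpc; congr (_ +i* _); ring. Qed.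

Lemma expi0 : expi (0 : R) = 1.
Proof. by rewrite /expi cos0 sin0. Qed.

Lemma expiX (t : R) n : expi t ^+ n = expi (n%:R * t).
Proof.
elim: n => [|n ih]; first by rewrite expr0 mul0r expi0.
by rewrite exprSr ih expiD mulrSr mulrDl mul1r.
Qed.

Lemma expi_neq1 (x : R) : 0 < x < pi *+ 2 -> expi x != 1.
Proof.
move=> /andP[x0 x2]; apply/negP => /eqP[hc hs].
have [xp|xp|xp] := ltgtP x pi.
- have := sin_gt0_pi (x := x); rewrite x0 xp hs ltxx => /(_ isT) //.
- have := sin_gt0_pi (x := x - pi); rewrite subr_gt0 xp.
  have -> : x - pi < pi by rewrite ltrBlDr -mulr2n.
  have := sinDpi (x - pi); rewrite subrK hs => /eqP; rewrite eq_sym oppr_eq0 => /eqP ->.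
  by rewrite ltxx => /(_ isT).
- by move: hc; rewrite xp cospi => hc; lra.
Qed.
Lemma cabsE (z : R[i]) : `|z| = (cabs z)%:C.
Proof. by rewrite /cabs normc_def. Qed.
Lemma cabsM (a b : R[i]) : cabs (a * b) = cabs a * cabs b.
Proof. by apply: complexI; rewrite rmorphM -!cabsE normrM. Qed.
Lemma cabs_expi (t : R) : cabs (expi t) = 1.
Proof. by rewrite /cabs normc_def /= cos2Dsin2 sqrtr1. Qed.
Lemma cabs_nat n : cabs (n%:R : R[i]) = n%:R.
Proof. by apply: complexI; rewrite -cabsE normr_nat rmorph_nat. Qed.
Lemma cabsN1 : cabs (-1 : R[i]) = 1.
Proof. by apply: complexI; rewrite -cabsE normrN1 rmorph1. Qed.
Lemma Re_le_cabs (z : R[i]) : `|complex.Re z| <= cabs z.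
Proof.
rewrite /cabs normc_def /= -sqrtr_sqr ler_sqrt ?lerDl ?sqr_ge0 //.
by rewrite addr_ge0 ?sqr_ge0.
Qed.
Lemma Im_le_cabs (z : R[i]) : `|complex.Im z| <= cabs z.
Proof.
rewrite /cabs normc_def /= -sqrtr_sqr ler_sqrt ?lerDr ?sqr_ge0 //.
by rewrite addr_ge0 ?sqr_ge0.
Qed.
Lemma int_small (x : R) : x \is a Num.int -> `|x| < 1 -> x = 0.
Proof.
move=> hx h; apply/eqP; apply/negP => /negP nz.
by have := norm_intr_ge1 hx nz; rewrite leNgt h.
Qed.
Lemma gauss_small (a : R[i]) : gauss_int a -> cabs a < 1 -> a = 0.
Proof.
move=> /andP[hr hi] ha.
have r0 := int_small hr (le_lt_trans (Re_le_cabs a) ha).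
have i0 := int_small hi (le_lt_trans (Im_le_cabs a) ha).
by case: a r0 i0 {hr hi ha} => x y /= -> ->.
Qed.
Definition rot (q : {poly R[i]}) (w : R[i]) := \poly_(j < size q) (q`_j * w ^+ j).

Lemma rot_horner q w z : (rot q w).[z] = q.[z * w].
Proof.
rewrite horner_poly horner_coef; apply: eq_bigr => j _.
by rewrite exprMn -mulrA [w ^+ j * _]mulrC.
Qed.

Lemma np_rot q t : np (rot q (expi t)) = np q.
Proof.
case: ax => _ Hrot _ _.
rewrite /np; have -> : (fun z => (rot q (expi t)).[z]) =
   (fun z => (fun z => q.[z]) (z * expi t)).
  by apply/funext => z; rewrite rot_horner.
by rewrite Hrot //; exact: inX_poly.
Qed.

Lemma cabs0 : cabs (0 : R[i]) = 0.
Proof. by rewrite /cabs normr0. Qed.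

Lemma np0 : np 0 = 0.
Proof. by rewrite -(scale0r (0 : {poly R[i]})) npZ cabs0 mul0r. Qed.

Lemma np_sum m (P : nat -> {poly R[i]}) :
  np (\sum_(r < m) P r) <= \sum_(r < m) np (P r).
Proof.
elim: m => [|m ih]; first by rewrite !big_ord0 np0.
rewrite !big_ord_recr /=; apply: le_trans (npD _ _) _.
by rewrite lerD2r.
Qed.

Lemma geom0 (y : R[i]) m : y ^+ m = 1 -> y != 1 -> \sum_(r < m) y ^+ r = 0.
Proof.
move=> ym y1; have := subrX1 y m; rewrite ym subrr => /esym/eqP.
by rewrite mulf_eq0 subr_eq0 (negbTE y1) /= => /eqP.
Qed.
Lemma expi2pi : expi (pi *+ 2 : R) = 1.
Proof. by rewrite /expi cos2pi sin2pi. Qed.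

Lemma coef_bound (q : {poly R[i]}) k : cabs q`_k * np 'X^k <= np q.
Proof.
pose m := maxn (size q) k.+1.
have m0 : (0 < m)%N by rewrite /m; lia.
have sq : (size q <= m)%N by rewrite /m; lia.
have km : (k < m)%N by rewrite /m; lia.
have mR : (0 : R) < m%:R by rewrite ltr0n.
pose th : R := pi *+ 2 / m%:R.
pose w := expi th.
have wX r : w ^+ r = expi (r%:R * th) by apply: expiX.
have wm : w ^+ m = 1.
  by rewrite wX /th mulrC -mulrA mulVf ?mulr1 ?expi2pi // lt0r_neq0.
have wne d : (0 < d < m)%N -> w ^+ d != 1.
  move=> /andP[d0 dm]; rewrite wX; apply: expi_neq1.
  have -> : d%:R * th = pi *+ 2 * (d%:R / m%:R) by rewrite /th; field; rewrite lt0r_neq0.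
  have p2 : (0 : R) < pi *+ 2 by rewrite mulrn_wgt0 // pi_gt0.
  rewrite mulr_gt0 ?divr_gt0 ?ltr0n //=.
  rewrite -[X in _ < X]mulr1 ltr_pM2l // ltr_pdivrMr // mul1r ltr_nat //.
pose A := \sum_(r < m) (w ^+ (r * (m - k))) *: rot q (w ^+ r).
have h1 : np A <= m%:R * np q.
  apply: le_trans (np_sum m (fun r : nat => w ^+ (r * (m - k)) *: rot q (w ^+ r))) _.
  apply: (@le_trans _ _ (\sum_(r < m) np q)); last by rewrite sumr_const card_ord mulr_natl.
  apply: ler_sum => r _; rewrite npZ !wX cabs_expi mul1r np_rot //.
have e r j z : w ^+ (r * (m - k)) * (q`_j * (z * w ^+ r) ^+ j) =
    q`_j * z ^+ j * (w ^+ (m - k + j)) ^+ r.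
  have -> : (w ^+ (m - k + j)) ^+ r = w ^+ (r * (m - k)) * w ^+ (r * j).
    by rewrite -exprM mulnC mulnDr exprD.
  have -> : (z * w ^+ r) ^+ j = z ^+ j * w ^+ (r * j) by rewrite exprMn -exprM.
  set a := w ^+ (r * (m - k)); set b := w ^+ (r * j); set c := z ^+ j.
  ring.
have g j : (j < m)%N -> \sum_(r < m) (w ^+ (m - k + j)) ^+ r = if j == k then m%:R else 0.
  move=> jm; case: eqP => [->|/eqP jk].
    by rewrite subnK ?(ltnW km) // wm (eq_bigr (fun _ => 1)) ?sumr_const ?card_ord // => r _; rewrite expr1n.
  apply: geom0; first by rewrite -exprM mulnC exprM wm expr1n.
  have [jk'|jk'] := ltnP j k.
    by apply: wne; apply/andP; split; lia.
  have -> : (m - k + j = m + (j - k))%N by lia.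
  by rewrite exprD wm mul1r; apply: wne; apply/andP; split; lia.
have h2 z : A.[z] = ((m%:R * q`_k) *: 'X^k).[z].
  rewrite horner_sum hornerZ hornerXn.
  under eq_bigr => r _ do rewrite hornerZ rot_horner (horner_coef_wide _ sq) mulr_sumr.
  rewrite exchange_big /=.
  under eq_bigr => j _ do under eq_bigr => r _ do rewrite e.
  under eq_bigr => j _ do rewrite -mulr_sumr g //.
  rewrite (bigD1 (Ordinal km)) //= eqxx big1 ?addr0; first by ring.
  by move=> j /negbTE; rewrite -val_eqE /= => ->; rewrite mulr0.
move: h1; rewrite (np_ext h2) npZ cabsM cabs_nat -mulrA ler_pM2l //.
Qed.
Lemma cvg0_ev (u : nat -> \bar R) : u @ \oo --> 0%E ->
  forall e : R, 0 < e -> exists M, forall n, (M <= n)%N -> (u n < e%:E)%E.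
Proof.
move=> /fine_cvgP [fu cu] e e0.
have [M1 _ H1] := fu.
have [M2 _ H2] := (cvgrPdist_lt _ _).1 cu e e0.
exists (maxn M1 M2) => n hn.
have f1 := H1 n (leq_trans (leq_maxl _ _) hn).
have f2 := H2 n (leq_trans (leq_maxr _ _) hn).
move: f2 => /=; rewrite sub0r normrN => f2.
by rewrite -(fineK f1) lte_fin (le_lt_trans (ler_norm _) f2).
Qed.
Lemma inX_add F G : inX N F -> inX N G -> inX N (fun z => F z + G z).
Proof.
case: ax => -[_ [_ _ _ Htri _]] _ _ _ [aF fF] [aG fG]; split.
  move=> z zD; have H := @derivableD R[i] R[i]^o R[i]^o F G (z : R[i]^o) 1 (aF z zD) (aG z zD).
  exact: H.
apply: le_lt_trans (Htri _ _ (conj aF fF) (conj aG fG)) _.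
by rewrite lte_add_pinfty.
Qed.

Lemma inX_scale c F : inX N F -> inX N (fun z => c * F z).
Proof.
case: ax => -[_ [_ _ Hsc _ _]] _ _ _ hF; have [aF fF] := hF; split.
  move=> z zD; have H := @derivableM R[i] R[i]^o (cst c) F (z : R[i]^o) 1 (@derivable_cst _ _ _ _ _ _) (aF z zD).
  exact: H.
rewrite Hsc // -(fineK (x := N F)); first by rewrite -EFinM ltry.
by rewrite ge0_fin_numE //; exact: inX_ge0.
Qed.
Lemma half_in_D : `|((2 : R)^-1)%:C| < 1.
Proof.
rewrite normc_def /= expr0n /= addr0 sqrtr_sqr ger0_norm ?invr_ge0 ?ler0n //.
rewrite -[X in _ < X]/((1 : R)%:C) ltcR invf_lt1 ?ltr0n // ltr1n //.
Qed.

Lemma np_X_gt0 k : 0 < np 'X^k.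
Proof.
case: ax => -[_ [_ Hdef _ _ _]] _ _ _.
rewrite lt_neqAle np_ge0 andbT; apply/negP => /eqP h.
have := Hdef _ (inX_poly 'X^k); rewrite npE -h => /(_ erefl _ half_in_D).
rewrite hornerXn => /eqP; rewrite expf_eq0 => /andP[_].
by rewrite eq_complex /= invr_eq0 pnatr_eq0.
Qed.


Lemma low_bound (c : nat -> R) K e : (forall k, 0 < c k) -> 0 < e ->
  (forall k, (K <= k)%N -> e <= c k) -> exists2 d, 0 < d & forall k, d <= c k.
Proof.
move=> cp; elim: K e => [|K ih] e e0 h; first by exists e => // k; apply: h.
apply: (ih (Num.min e (c K))); first by rewrite lt_min e0 cp.
move=> k; rewrite leq_eqVlt => /orP[/eqP <-|Kk]; first by rewrite ge_min lexx orbT.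
by rewrite ge_min h.
Qed.
Lemma gauss_sub (a b : R[i]) : gauss_int a -> gauss_int b -> gauss_int (a - b).
Proof.
case: a => xa ya; case: b => xb yb; rewrite /gauss_int /=.
by move=> /andP[h1 h2] /andP[h3 h4]; rewrite !rpredB.
Qed.

Lemma main_sec (f : R[i] -> R[i]) : inX N f -> ~ is_polynomial_on_D f ->
  forall p : nat -> {poly R[i]}, (forall n, PnZ n (p n)) ->
  (fun n => N (fun z => f z - (p n).[z])) @ \oo --> 0%E ->
  forall K (e : R), 0 < e -> ~ (forall k, (K <= k)%N -> e <= np 'X^k).
Proof.
case: ax => -[_ [_ Hdef Hsc Htri _]] _ _ _.
move=> hf nf p hp hc K e e0 hK.
have [d d0 hd] := low_bound (c := fun k => np 'X^k) np_X_gt0 e0 hK.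
pose G n := fun z => f z - (p n).[z].
have GX n : inX N (G n).
  have -> : G n = (fun z => f z + ((-1) *: p n).[z]).
    by apply/funext => z; rewrite /G hornerZ mulN1r.
  exact: inX_add hf (inX_poly _).
have [M HM] := cvg0_ev hc (divr_gt0 d0 (ltr0n _ 2)).
have eqp n : (M <= n)%N -> p n = p M.
  move=> Mn.
  have hn : np (p n - p M) < d.
    have eq : (fun z => (p n - p M).[z]) = (fun z => G M z + (-1) * G n z).
      by apply/funext => z; rewrite /G hornerD hornerN; ring.
    rewrite -lte_fin -npE eq.
    apply: le_lt_trans (Htri _ _ (GX M) (inX_scale (-1) (GX n))) _.
    rewrite Hsc // cabsN1 mul1e (splitr d) EFinD.
    apply: lteD; [exact: HM M (leqnn M) | exact: HM n Mn].
  apply/polyP => k; apply/eqP; rewrite -subr_eq0 -coefB; apply/eqP; apply: gauss_small.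
    by rewrite coefB; apply: gauss_sub; [case: (hp n) | case: (hp M)].
  rewrite ltNge; apply/negP => h1.
  have := coef_bound (p n - p M) k.
  have : d <= cabs (p n - p M)`_k * np 'X^k.
    apply: le_trans (hd k) _.
    by rewrite -[X in X <= _]mul1r ler_wpM2r // np_ge0.
  move: hn; lra.
have z0 : N (G M) = 0%E.
  apply/eqP; rewrite eq_le inX_ge0 // andbT.
  apply/lee_addgt0Pr => eps eps0; rewrite add0e.
  have [M' HM'] := cvg0_ev hc eps0.
  have := HM' (maxn M M') (leq_maxr _ _).
  by rewrite eqp ?leq_maxl // => /ltW.
apply: nf; exists (p M) => z zD; apply/eqP; rewrite -subr_eq0; apply/eqP.
exact: Hdef _ (GX M) z0 z zD.
Qed.
Lemma liminf_zero (u : nat -> \bar R) : (forall n, 0 <= u n)%E ->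
  (forall K (e : R), 0 < e -> exists2 k, (K <= k)%N & (u k < e%:E)%E) ->
  limn_einf u = 0%E.
Proof.
move=> u0 h; rewrite limn_einf_lim (cvg_lim _ (@cvg_einfs_sup R u)) //.
apply/eqP; rewrite eq_le; apply/andP; split.
  apply: ub_ereal_sup => _ [n _ <-].
  apply/lee_addgt0Pr => e e0; rewrite add0e.
  have [k kn uk] := h n e e0.
  apply: le_trans (ltW uk); apply: ereal_inf_lbound; by exists k.
apply: (@le_trans _ _ (einfs u 0)); last by apply: ereal_sup_ubound; exists 0%N.
by apply/ereal_infP => _ [k _ <-].
Qed.
Lemma main_T (f : R[i] -> R[i]) : inX N f -> ~ is_polynomial_on_D f ->
  forall p : nat -> {poly R[i]}, (forall n, PnZ n (p n)) ->
  (fun n => N (fun z => f z - (p n).[z])) @ \oo --> 0%E ->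
  limn_einf (fun n => N (fun z => z ^+ n)) = 0%E.
Proof.
move=> hf nf p hp hc.
have uE n : N (fun z => z ^+ n) = (np 'X^n)%:E.
  by rewrite -npE; congr N; apply/funext => z; rewrite hornerXn.
apply: liminf_zero => [n|K e e0]; first by rewrite uE lee_fin np_ge0.
case: (pselect (exists2 k, (K <= k)%N & (N (fun z : R[i] => (z ^+ k)%R) < e%:E)%E)) => // hne.
exfalso; apply: (main_sec hf nf hp hc e0 (K := K)) => k Kk.
rewrite leNgt; apply/negP => hk; apply: hne; exists k => //; by rewrite uE lte_fin.
Qed.
End T.

Theorem theorem5p4 (R : realType) (N : (R[i] -> R[i]) -> \bar R) :
  X_axioms N ->
  forall f : R[i] -> R[i], inX N f -> ~ is_polynomial_on_D f ->
  forall p : nat -> {poly R[i]}, (forall n, PnZ n (p n)) ->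
  (fun n => N (fun z => f z - (p n).[z])) @ \oo --> 0%E ->
  limn_einf (fun n => N (fun z => z ^+ n)) = 0%E.
Proof. by move=> ax; exact: main_T ax. Qed.
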